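(* There is an absolute constant $C>0$ such that the following holds. Let $\langle\mathcal X,\mathcal C,d,(x_1,\dots,x_n)\rangle$ be a facility location instance and $0<\epsilon<1$. Suppose the panel size $k\le n$ satisfies $k\ge C\log(1/\epsilon)$ and $$\mathbb P_{S\sim\mathcal U_{k,n}}\big[\textsc{Social-Cost}(\overline q(S))\le(1+\epsilon)\cdot\textsc{Social-Opt}\big]\ge1-\epsilon .$$ Then $\mathbb E_{S\sim\mathcal U_{k,n}}[\textsc{Social-Cost}(\overline q(S))]\le(1+5\epsilon)\cdot\textsc{Social-Opt}$.
   Context: A facility location instance consists of a metric space $(\mathcal X,d)$ with $d:\mathcal X\times\mathcal X\to[0,1]$, candidate locations $\mathcal C\subseteq\mathcal X$, and agent locations $x_1,\dots,x_n\in\mathcal X$. $\textsc{Social-Cost}(q)=\frac1n\sum_i d(q,x_i)$, $\textsc{Social-Opt}=\min_{q\in\mathcal C}\textsc{Social-Cost}(q)$; for a panel $S\subseteq[n]$ of size $k$, $\textsc{Panel-Cost}(q,S)=\frac1k\sum_{i\in S}d(q,x_i)$ and $\overline q(S)\in\arg\min_{q\in\mathcal C}\textsc{Panel-Cost}(q,S)$ (minimizers assumed to exist). $\mathcal U_{k,n}$ is the uniform distribution over size-$k$ subsets of $[n]$. *)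

(* Defs.v *)
From mathcomp Require Import all_boot all_order all_algebra.
From mathcomp Require Import all_classical all_reals all_analysis.
Set Implicit Arguments. Unset Strict Implicit. Unset Printing Implicit Defensive.
Import Order.TTheory GRing.Theory Num.Theory.
Local Open Scope ring_scope.

Definition is_metric01 (R : realType) (X : Type) (d : X -> X -> R) : Prop :=
  [/\ forall x y, 0 <= d x y /\ d x y <= 1,
      forall x y, d x y = 0 <-> x = y,
      forall x y, d x y = d y x &
      forall x y z, d x z <= d x y + d y z].

Definition social_cost (R : realType) (X : Type) (d : X -> X -> R) (n : nat)
  (x : 'I_n -> X) (q : X) : R :=
  (\sum_(i < n) d q (x i)) / n%:R.

Definition panel_cost (R : realType) (X : Type) (d : X -> X -> R) (n k : nat)
  (x : 'I_n -> X) (q : X) (S : {set 'I_n}) : R :=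
  (\sum_(i in S) d q (x i)) / k%:R.

Definition panels (n k : nat) : {set {set 'I_n}} := [set S : {set 'I_n} | #|S| == k].

Definition unif_prob (R : realType) (n k : nat) (E : {set 'I_n} -> bool) : R :=
  #|[set S in panels n k | E S]|%:R / #|panels n k|%:R.

Definition unif_exp (R : realType) (n k : nat) (f : {set 'I_n} -> R) : R :=
  (\sum_(S in panels n k) f S) / #|panels n k|%:R.

Arguments panel_cost {R X} d {n} k x q S.
Arguments unif_prob {R} n k E.
Arguments unif_exp {R} n k f.

(* Main.v *)
Require Import Defs.
From mathcomp Require Import all_boot all_order all_algebra.
From mathcomp Require Import all_classical all_reals all_analysis.
From mathcomp Require Import Rstruct Rstruct_topology.
From mathcomp Require Import ring lra.
Import Order.TTheory GRing.Theory Num.Theory.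
Local Open Scope ring_scope.

Lemma amgm (R : realFieldType) (m x : R) (j : nat) : 0 <= m -> 0 <= x ->
  j.+1%:R * m * x ^+ j <= m ^+ j.+1 + j%:R * x ^+ j.+1.
Proof.
move=> m0 x0; elim: j => [|j IH]; first by rewrite !expr0 expr1 mul1r mulr1 mul0r addr0.
have H1 : (m ^+ j.+1 - x ^+ j.+1) * (m - x) >= 0.
  have [mx|xm] := leP x m.
    by apply: mulr_ge0; rewrite subr_ge0 // lerXn2r // nnegrE.
  apply: mulr_le0; rewrite subr_le0 // ?lerXn2r ?nnegrE // ltW //.
have IHx := ler_wpM2r x0 IH.
rewrite !exprS in IHx H1 *.
rewrite -!natr1 in IHx *.
nra.
Qed.

Lemma binalg (R : realFieldType) (N j : nat) (x m : R) : 0 <= x -> 0 <= m ->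
  'C(N, j)%:R * ((N.+1%:R * m - N%:R * x) * x ^+ j) + 'C(N, j.+1)%:R * x ^+ j.+1
  <= 'C(N.+1, j.+1)%:R * m ^+ j.+1.
Proof.
move=> x0 m0.
have jp : (0 : R) < j.+1%:R by rewrite ltr0n.
rewrite -(ler_pM2l jp).
have E1 : j.+1%:R * 'C(N, j.+1)%:R = (N - j)%N%:R * 'C(N, j)%:R :> R.
  by rewrite -!natrM mul_bin_left.
have E2 : j.+1%:R * 'C(N.+1, j.+1)%:R = N.+1%:R * 'C(N, j)%:R :> R.
  by rewrite -!natrM -mul_bin_diag.
rewrite mulrDr !mulrA E1 E2.
have [jN|Nj] := leqP j N; last first.
  by rewrite bin_small // !(mulr0, mul0r, add0r, addr0).
rewrite natrB //.
have A := @amgm R m x j m0 x0.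
have Cp : (0 : R) <= 'C(N, j)%:R by rewrite ler0n.
have Np : (0 : R) <= N.+1%:R by rewrite ler0n.
set c := 'C(N, j)%:R in Cp *.
have H2 : j.+1%:R * m * x ^+ j - j%:R * x ^+ j.+1 <= m ^+ j.+1 by lra.
have H3 := ler_wpM2l (mulr_ge0 Np Cp) H2.
apply: le_trans _ H3.
rewrite le_eqVlt; apply/orP; left; apply/eqP; rewrite exprS -!natr1; ring.
Qed.

Section Sym.
Variables (R : realFieldType) (T : finType).

Definition esym (w : T -> R) (A : {set T}) (k : nat) : R :=
  \sum_(S : {set T} | (S \subset A) && (#|S| == k)) \prod_(i in S) w i.

Lemma sum_notin (F : {set T} -> R) (A : {set T}) a k :
  \sum_(S : {set T} | (S \subset A) && (#|S| == k) && (a \notin S)) F S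
  = \sum_(S : {set T} | (S \subset A :\ a) && (#|S| == k)) F S.
Proof.
apply: eq_bigl => S; rewrite finset.subsetD1; case: (S \subset A); case: (a \in S); by rewrite ?andbF ?andbT.
Qed.

Lemma sum_in (F : {set T} -> R) (A : {set T}) a k : a \in A ->
  \sum_(S : {set T} | (S \subset A) && (#|S| == k.+1) && (a \in S)) F S
  = \sum_(S : {set T} | (S \subset A :\ a) && (#|S| == k)) F (a |: S).
Proof.
move=> aA.
rewrite (reindex_onto (fun S => a |: S) (fun S => S :\ a)); last first.
  by move=> S /andP [_ aS]; rewrite finset.setD1K.
apply: eq_bigl => S; rewrite finset.subsetD1.
have [aS|naS] := boolP (a \in S).
  rewrite /= andbF /=; apply/negP => /andP [_ /eqP E].
  by move: aS; rewrite -E !inE eqxx.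
rewrite finset.setU1K // eqxx andbT finset.setU11 andbT finset.cardsU1 naS add1n eqSS /= andbT.
by rewrite finset.subUset finset.sub1set aA.
Qed.

Lemma esym0 w A : esym w A 0 = 1.
Proof.
rewrite /esym (bigD1 (@finset.set0 T)) /=; last by rewrite finset.sub0set finset.cards0.
rewrite finset.big_set0 big1 ?addr0 // => S /andP [/andP [_ /eqP /finset.cards0_eq ->]]; by rewrite eqxx.
Qed.

Lemma esym_set0 w k : esym w (@finset.set0 T) k.+1 = 0.
Proof.
rewrite /esym big1 // => S /andP [].
by rewrite finset.subset0 => /eqP ->; rewrite finset.cards0.
Qed.

Lemma esym_split w (A : {set T}) a k : a \in A ->
  esym w A k.+1 = w a * esym w (A :\ a) k + esym w (A :\ a) k.+1.
Proof.
move=> aA; rewrite /esym (bigID (fun S : {set T} => a \in S)) /= sum_in // sum_notin.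
congr (_ + _); rewrite mulr_sumr; apply: eq_bigr => S /andP [SA _].
move: SA; rewrite finset.subsetD1 => /andP [_ naS].
by rewrite finset.big_setU1.
Qed.

Lemma maclaurin w : (forall i, 0 <= w i) -> forall N (A : {set T}), #|A| = N ->
  forall k, esym w A k <= 'C(N, k)%:R * ((\sum_(i in A) w i) / N%:R) ^+ k.
Proof.
move=> w0; elim => [|N IH] A cA [|k].
- by rewrite esym0 bin0 expr0 mulr1.
- rewrite (finset.cards0_eq cA) esym_set0.
  by apply: mulr_ge0; rewrite ?ler0n // exprn_ge0 // divr_ge0 // ?ler0n // sumr_ge0.
- by rewrite esym0 bin0 expr0 mulr1.
have : (0 < #|A|)%N by rewrite cA.
rewrite finset.card_gt0 => /finset.set0Pn [a aA].
have cA' : #|A :\ a| = N by move: cA; rewrite (finset.cardsD1 a) aA add1n => -[].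
rewrite (@esym_split w A a k aA) (finset.big_setD1 a aA) /=.
set s' := \sum_(i in A :\ a) w i.
set x := s' / N%:R.
have x0 : 0 <= x by rewrite divr_ge0 // ?ler0n // sumr_ge0.
have sx : s' = N%:R * x.
  have [N0|Npos] := eqVneq N 0%N.
    by rewrite /s' (finset.cards0_eq (etrans cA' N0)) finset.big_set0 N0 mul0r.
  by rewrite /x mulrC divfK // pnatr_eq0.
set m := (w a + s') / N.+1%:R.
have m0 : 0 <= m by rewrite divr_ge0 // ?ler0n // addr_ge0 // sumr_ge0.
have H1 := IH _ cA' k; have H2 := IH _ cA' k.+1.
rewrite -/s' -/x in H1 H2.
apply: le_trans (_ : w a * ('C(N, k)%:R * x ^+ k) + 'C(N, k.+1)%:R * x ^+ k.+1 <= _).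
  by apply: lerD => //; apply: ler_wpM2l.
have E : w a = N.+1%:R * m - N%:R * x.
  by rewrite /m mulrC divfK ?pnatr_eq0 // -sx addrK.
rewrite E mulrCA.
exact: binalg.
Qed.

End Sym.

Lemma lnconc (R : realType) (u y : R) : 0 <= u -> 0 <= y -> y <= 1 ->
  y * ln (1 + u) <= ln (1 + u * y).
Proof.
move=> u0 y0 y1.
have := @concave_ln R (Itv01 y0 y1) (1 + u) 1.
rewrite !convRE /= ln1 mulr0 addr0.
have -> : y * (1 + u) + (1 - y) * 1 = 1 + u * y by ring.
apply => //; lra.
Qed.

Lemma tail_bound (R : realType) (I : finType) (S : {set I}) (dd : I -> R) (mu D : R) (k : nat) :
  (forall i, 0 <= dd i) -> 0 < mu -> 3 * mu < D -> (2 <= k)%N -> #|S| = k ->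
  k%:R * D <= 2 * \sum_(i in S) Num.min (dd i) D ->
  D <= 6 * mu * (\prod_(i in S) (1 + dd i / (3 * mu))) / expR (k%:R / 2 * ln 2).
Proof.
move=> dd0 mu0 Dmu k2 cS HD.
have D0 : 0 < D by lra.
set u := D / (3 * mu).
have u1 : 1 < u by rewrite /u ltr_pdivlMr; lra.
set L := ln (1 + u).
have L0 : 0 <= L by rewrite /L ln_ge0 //; lra.
set y := fun i => Num.min (dd i) D / D.
have Sy : k%:R / 2 <= \sum_(i in S) y i.
  rewrite /y -mulr_suml ler_pdivlMr // mulrAC ler_pdivrMr //; lra.
have Hp : expR (\sum_(i in S) y i * L) <= \prod_(i in S) (1 + dd i / (3 * mu)).
  rewrite expR_sum; apply: ler_prod => i _; rewrite expR_ge0 /=.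
  have m0 : 0 <= Num.min (dd i) D by rewrite le_min dd0 ltW.
  have mD : Num.min (dd i) D <= D by rewrite ge_min lexx orbT.
  have md : Num.min (dd i) D <= dd i by rewrite ge_min lexx.
  have y0 : 0 <= y i by rewrite /y divr_ge0 // ltW.
  have y1 : y i <= 1 by rewrite /y ler_pdivrMr // mul1r.
  apply: le_trans (_ : expR (ln (1 + u * y i)) <= _).
    rewrite ler_expR; apply: lnconc => //; lra.
  rewrite lnK ?posrE; last by apply: ltr_pwDl => //; apply: mulr_ge0 => //; lra.
  apply: lerD => //.
  have -> : u * y i = Num.min (dd i) D / (3 * mu).
    rewrite /u /y; field; apply/andP; split; rewrite gt_eqF //; lra.
  rewrite ler_pM2r // invr_gt0; lra.
have HL : (k%:R / 2 * ln 2) + ln ((1 + u) / 2) <= \sum_(i in S) y i * L.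
  rewrite -mulr_suml.
  have E : ln ((1 + u) / 2) = L - ln 2 by rewrite ln_div ?posrE //; lra.
  have k2' : (2 : R) <= k%:R by rewrite ler_nat.
  have l2 : ln 2 <= L by rewrite /L ler_ln ?posrE; lra.
  rewrite E; nra.
have H4 : expR (k%:R / 2 * ln 2) * ((1 + u) / 2) <= \prod_(i in S) (1 + dd i / (3 * mu)).
  apply: le_trans Hp; rewrite -[X in _ * X]lnK ?posrE; last lra.
  by rewrite -mathcomp.analysis.exp.expRD ler_expR.
set P := \prod_(i in S) (1 + dd i / (3 * mu)) in H4 *.
set E := expR (k%:R / 2 * ln 2) in H4 *.
have E0 : 0 < E by apply: expR_gt0.
rewrite ler_pdivlMr //.
have Du : D = 3 * mu * u by rewrite /u; field; rewrite gt_eqF //; lra.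
rewrite Du; nra.
Qed.

Section Main.
Variables (R : realType) (X : Type) (d : X -> X -> R) (Cand : X -> Prop) (n : nat)
    (x : 'I_n -> X) (k : nat) (qopt : X) (qbar : {set 'I_n} -> X).
Hypothesis hm : is_metric01 d.
Hypothesis hC : Cand qopt.
Hypothesis hbar : forall S, S \in panels n k ->
       Cand (qbar S) /\
       forall q, Cand q -> panel_cost d k x (qbar S) S <= panel_cost d k x q S.
Hypothesis kn : (k <= n)%N.
Hypothesis k1 : (1 <= k)%N.

Let dd i := d qopt (x i).
Let mu := social_cost d x qopt.
Let D S := d (qbar S) qopt.

Let n0 : (0 < n)%N. Proof. exact: leq_trans k1 kn. Qed.
Let nR : (0 : R) < n%:R. Proof. by rewrite ltr0n n0. Qed.
Let kR : (0 : R) < k%:R. Proof. by rewrite ltr0n. Qed.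

Let dd0 i : 0 <= dd i.
Proof. by move: hm; rewrite /is_metric01 => -[hb _ _ _]; case: (hb qopt (x i)). Qed.

Let mu0 : 0 <= mu.
Proof. rewrite /mu /social_cost; apply: divr_ge0; [apply: sumr_ge0 => i _; exact: dd0 | by rewrite ler0n]. Qed.

Let mu_sum : \sum_i dd i = n%:R * mu.
Proof. by rewrite /mu /social_cost mulrC divfK // gt_eqF. Qed.

Lemma F1 S : social_cost d x (qbar S) <= mu + D S.
Proof.
move: hm; rewrite /is_metric01 => -[_ _ hs ht].
rewrite {1}/social_cost ler_pdivrMr // mulrDl [mu * _]mulrC -mu_sum addrC.
have -> : D S * n%:R = \sum_(i < n) D S by rewrite sumr_const card_ord mulr_natr.
rewrite -big_split /=; apply: ler_sum => i _.
by rewrite /D /dd; apply: ht.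
Qed.

Lemma F2 S : S \in panels n k ->
  k%:R * D S <= 2 * \sum_(i in S) Num.min (dd i) (D S).
Proof.
move=> SP; move: hm; rewrite /is_metric01 => -[_ _ hs ht].
have cS : #|S| = k by move: SP; rewrite inE => /eqP.
have [_ Hb] := hbar S SP.
have := Hb _ hC; rewrite /panel_cost ler_pM2r ?invr_gt0 // => H.
have Hp : \sum_(i in S) (D S + dd i - 2 * Num.min (dd i) (D S))
          <= \sum_(i in S) d (qbar S) (x i).
  apply: ler_sum => i _.
  have [h|h] := leP (dd i) (D S).

    have := ht (qbar S) (x i) qopt; rewrite (hs (x i) qopt) /D /dd; lra.

  have := ht qopt (qbar S) (x i); rewrite (hs qopt (qbar S)) /D /dd; lra.
have E1 : \sum_(i in S) (D S + dd i - 2 * Num.min (dd i) (D S))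
   = k%:R * D S + \sum_(i in S) dd i - 2 * \sum_(i in S) Num.min (dd i) (D S).
  rewrite sumrB big_split /= sumr_const cS mulr_sumr mulr_natl //.
move: Hp; rewrite E1.
rewrite /dd in H *; lra.
Qed.

Lemma card_panels : #|panels n k| = 'C(n, k).
Proof. by rewrite /panels card_draws card_ord. Qed.

Let CP : (0 : R) < 'C(n, k)%:R.
Proof. by rewrite ltr0n bin_gt0. Qed.

Lemma count_in i : \sum_(S in panels n k) (if i \in S then 1 else 0 : R) = 'C(n.-1, k.-1)%:R.
Proof.
case: k k1 kn hbar => [//|j] _ kn' _ /=.
rewrite -big_mkcondr /=.
rewrite (eq_bigl (fun S : {set 'I_n} => (S \subset [set: 'I_n]) && (#|S| == j.+1) && (i \in S))); last first.
  by move=> S; rewrite inE finset.subsetT.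
rewrite sum_in ?inE //.
rewrite (eq_bigl (fun S => S \in [set S : {set 'I_n} | S \subset [set: 'I_n] :\ i & #|S| == j])); last first.
  by move=> S; rewrite inE.
rewrite sumr_const cards_draws.
have -> : #|[set: 'I_n] :\ i| = n.-1.
  by move: (finset.cardsD1 i [set: 'I_n]); rewrite inE finset.cardsT card_ord add1n => h; rewrite [in RHS]h.
by [].
Qed.

Lemma sumS : \sum_(S in panels n k) \sum_(i in S) dd i = 'C(n.-1, k.-1)%:R * (n%:R * mu).
Proof.
rewrite -mu_sum mulr_sumr.
under eq_bigr => S _ do rewrite big_mkcond /=.
rewrite exchange_big /=; apply: eq_bigr => i _.
rewrite -(count_in i) mulr_suml; apply: eq_bigr => S _.
by case: (i \in S); rewrite ?mul1r ?mul0r.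
Qed.

Lemma crude : unif_exp n k (fun S => social_cost d x (qbar S)) <= 3 * mu.
Proof.
rewrite /unif_exp card_panels ler_pdivrMr //.
apply: le_trans (_ : \sum_(S in panels n k) (mu + 2 / k%:R * \sum_(i in S) dd i) <= _).
  apply: ler_sum => S SP; have h1 := F1 S; apply: (le_trans h1); apply: lerD => //.
  rewrite mulrAC ler_pdivlMr // mulrC.
  apply: le_trans (F2 S SP) _; apply: ler_wpM2l => //; apply: ler_sum => i _.
  by rewrite ge_min lexx.
rewrite big_split /= sumr_const card_panels -mulr_sumr sumS.
have E : n%:R * 'C(n.-1, k.-1)%:R = k%:R * 'C(n, k)%:R :> R.
  by rewrite -!natrM; have := mul_bin_diag n k.-1; rewrite prednK // => ->.
have -> : 2 / k%:R * ('C(n.-1, k.-1)%:R * (n%:R * mu)) = 2 * 'C(n, k)%:R * mu.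
  rewrite mulrA [_ * n%:R]mulrC E; field; rewrite gt_eqF //.
rewrite -mulr_natl; lra.
Qed.

Lemma prodsum : 0 < mu ->
  \sum_(S in panels n k) \prod_(i in S) (1 + dd i / (3 * mu)) <= 'C(n, k)%:R * (4 / 3) ^+ k.
Proof.
move=> mupos.
set w := fun i => 1 + dd i / (3 * mu).
have w0 : forall i, 0 <= w i.
  move=> i; rewrite /w; apply: addr_ge0 => //; apply: divr_ge0 => //; lra.
have H := @maclaurin R _ w w0 n [set: 'I_n] (etrans (finset.cardsT _) (card_ord n)) k.
unfold esym in H.
rewrite (eq_bigl (fun S : {set 'I_n} => S \in panels n k)) in H; last by move=> S; rewrite inE finset.subsetT.
apply: le_trans H _; apply: ler_wpM2l => //.
have -> : (\sum_(i in [set: 'I_n]) w i) / n%:R = 4 / 3.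
  rewrite (eq_bigl xpredT); last by move=> i; rewrite inE.
  rewrite /w big_split /= sumr_const card_ord -mulr_suml mu_sum.
  field; apply/andP; split; rewrite gt_eqF //; lra.
by [].
Qed.

Lemma fine_bound (eps : R) : (2 <= k)%N -> 0 <= eps -> eps <= 1 ->
  1 - eps <= unif_prob n k
                 (fun S => social_cost d x (qbar S) <= (1 + eps) * social_cost d x qopt) ->
  unif_exp n k (fun S => social_cost d x (qbar S))
   <= (1 + 4 * eps) * mu + 6 * mu * (4 / 3) ^+ k / expR (k%:R / 2 * ln 2).
Proof.
move=> k2 e0 e1 hp.
have [mu00|mupos] := eqVneq mu 0.
  apply: le_trans (crude) _; rewrite mu00; lra.
have {mupos} mupos : 0 < mu by rewrite lt_def mupos mu0.
set G := fun S => social_cost d x (qbar S) <= (1 + eps) * social_cost d x qopt.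
set E := expR (k%:R / 2 * ln 2).
have E0 : 0 < E by apply: expR_gt0.
pose T := fun S : {set 'I_n} => 6 * mu * (\prod_(i in S) (1 + dd i / (3 * mu))) / E.
have T0 : forall S : {set 'I_n}, 0 <= T S.
  move=> S; rewrite /T; apply: divr_ge0; last exact: ltW.
  apply: mulr_ge0; first lra.
  apply: prodr_ge0 => i _; apply: addr_ge0 => //; apply: divr_ge0 => //; lra.
have pw : forall S, S \in panels n k -> social_cost d x (qbar S) <=
    4 * mu + (eps - 3) * mu * (if G S then 1 else 0) + T S.
  move=> S SP.
  have hT := T0 S.
  case hG: (G S).
    move: hG; rewrite /G -/mu => hG; lra.
  have h1 := F1 S.
  have [hD|hD] := leP (D S) (3 * mu); first lra.
  have cS : #|S| = k by move: SP; rewrite inE => /eqP.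
  have := @tail_bound R _ S dd mu (D S) k dd0 mupos hD k2 cS (F2 S SP).
  rewrite -/E; move: hT; rewrite /T; lra.
pose g := @unif_prob R n k G.
have Gsum : \sum_(S in panels n k) (if G S then 1 else 0 : R) = g * 'C(n, k)%:R.
  rewrite /g /unif_prob card_panels divfK ?gt_eqF // -big_mkcondr /=.
  rewrite (eq_bigl (fun S => S \in [set S in panels n k | G S])); last by move=> S; rewrite inE.
  by rewrite sumr_const.
rewrite /unif_exp card_panels ler_pdivrMr //.
apply: le_trans (_ : \sum_(S in panels n k) (4 * mu + (eps - 3) * mu * (if G S then 1 else 0) + T S) <= _).
  by apply: ler_sum.
rewrite !big_split /= sumr_const card_panels -mulr_sumr Gsum /T -mulr_suml -mulr_sumr.
have HP := prodsum mupos.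
set Q := \sum_(S in panels n k) \prod_(i in S) (1 + dd i / (3 * mu)) in HP *.
set c := 'C(n, k)%:R in HP Gsum *.
have hg : 1 - eps <= g by exact: hp.
set z := (4 / 3) ^+ k in HP *.
have HT : 6 * mu * Q / E <= c * (6 * mu * z / E).
  have -> : c * (6 * mu * z / E) = 6 * mu * (c * z) / E by ring.
  rewrite ler_pM2r ?invr_gt0 //; apply: ler_wpM2l => //; lra.
have -> : 4 * mu *+ 'C(n, k) = 4 * mu * c by rewrite mulr_natr.
have hx : (eps - 3) * mu * (g * c) <= (eps - 3) * mu * ((1 - eps) * c).
  have hgc : (1 - eps) * c <= g * c by apply: ler_wpM2r => //; apply: ltW.
  have hm3 : 0 <= (3 - eps) * mu by apply: mulr_ge0; lra.
  nra.
set w := 6 * mu * z / E in HT *.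
have hc : 0 <= eps * eps * (mu * c) by apply: mulr_ge0; [nra | apply: mulr_ge0 => //; apply: ltW].
have hr : (eps - 3) * mu * ((1 - eps) * c) = (- 3 + 4 * eps) * (mu * c) - eps * eps * (mu * c) by ring.
rewrite hr in hx.
lra.
Qed.
End Main.

Lemma c0_pos (R : realType) : 0 < ln (2 : R) / 2 - ln (4 / 3).
Proof.
have h : ln ((4 / 3) ^+ 2) < ln (2 : R).
  rewrite ltr_ln ?posrE ?expr2; lra.
rewrite lnXn in h; last lra.
rewrite mulr2n in h. rewrite subr_gt0 ltr_pdivlMr; last lra.
lra.
Qed.

Theorem corollary4p3 :
  exists C : Rdefinitions.R, 0 < C /\
  forall (X : Type) (d : X -> X -> Rdefinitions.R) (Cand : X -> Prop) (n : nat)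
    (x : 'I_n -> X) (k : nat) (eps : Rdefinitions.R)
    (qopt : X) (qbar : {set 'I_n} -> X),
    is_metric01 d ->
    (* qopt attains Social-Opt = min_{q in Cand} Social-Cost(q) *)
    Cand qopt ->
    (forall q, Cand q -> social_cost d x qopt <= social_cost d x q) ->
    (* qbar S is a minimizer of the panel cost over Cand, for each panel S *)
    (forall S, S \in panels n k ->
       Cand (qbar S) /\
       forall q, Cand q -> panel_cost d k x (qbar S) S <= panel_cost d k x q S) ->
    0 < eps -> eps < 1 ->
    (k <= n)%N ->
    C * ln (1 / eps) <= k%:R ->
    1 - eps <= unif_prob n k
                 (fun S => social_cost d x (qbar S) <= (1 + eps) * social_cost d x qopt) ->
    unif_exp n k (fun S => social_cost d x (qbar S))
      <= (1 + 5 * eps) * social_cost d x qopt.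
Proof.
set c0 := ln (2 : Rdefinitions.R) / 2 - ln (4 / 3).
have c0p : 0 < c0 := c0_pos _.
exists (3 / c0); split; first by apply: divr_gt0 => //; lra.
move=> X d Cand n x k eps qopt qbar hm hC _ hbar e0 e1 kn hk hp.
have le0 : 0 < ln (1 / eps).
  apply: ln_gt0; rewrite ltr_pdivlMr //; lra.
have k1 : (0 < k)%N.
  rewrite -(ltr0n Rdefinitions.R); apply: lt_le_trans hk; apply: mulr_gt0 => //.
  by apply: divr_gt0 => //; lra.
have mu0 : 0 <= social_cost d x qopt.
  move: hm; rewrite /is_metric01 => -[hb _ _ _].
  rewrite /social_cost; apply: divr_ge0; last by rewrite ler0n.
  by apply: sumr_ge0 => i _; case: (hb qopt (x i)).
have [eb|es] := leP (2 / 5) eps.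
  apply: le_trans (@crude _ _ _ _ _ _ _ _ _ hm hC hbar kn k1) _; nra.
set mu := social_cost d x qopt in mu0 *.
have lneps : ln (1 / eps) = - ln eps by rewrite div1r lnV ?posrE.
have kC : 3 * ln (1 / eps) <= k%:R * c0.
  by move: hk; rewrite mulrAC ler_pdivrMr.
have k2 : (2 <= k)%N.
  have h1 : ln 2 < ln (1 / eps).
    rewrite ltr_ln ?posrE; try lra; rewrite ltr_pdivlMr //; lra.
  have h2 : 0 < ln (2 : Rdefinitions.R) by apply: ln_gt0; lra.
  have h4 : 0 < ln (4 / 3 : Rdefinitions.R) by apply: ln_gt0; lra.
  have h3 : c0 < ln (1 / eps) by rewrite /c0; lra.
  rewrite -(ltr_nat Rdefinitions.R).
  have : 3 * c0 < k%:R * c0 by lra.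
  by rewrite ltr_pM2r // => h; lra.
have := @fine_bound _ _ _ _ _ _ _ _ _ hm hC hbar kn k1 eps k2 (ltW e0) (ltW e1) hp.
rewrite -/mu => H; apply: le_trans H _.
have key : 6 * (4 / 3) ^+ k / expR (k%:R / 2 * ln 2) <= eps.
  have -> : (4 / 3 : Rdefinitions.R) ^+ k = expR (k%:R * ln (4 / 3)).
    by rewrite expRM_natl lnK ?posrE //; lra.
  rewrite -mulrA -expRB.
  have -> : k%:R * ln (4 / 3) - k%:R / 2 * ln 2 = - (k%:R * c0) :> Rdefinitions.R.
    by rewrite /c0; ring.
  apply: le_trans (_ : 6 * expR (3 * ln eps) <= _).
    rewrite ler_pM2l ?ler_expR; lra.

  rewrite expRM_natl lnK ?posrE //.
  nra.
have : 0 <= mu * (eps - 6 * (4 / 3) ^+ k / expR (k%:R / 2 * ln 2)).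
  apply: mulr_ge0 => //; lra.
set w := 6 * (4 / 3) ^+ k / expR (k%:R / 2 * ln 2) in key *.
have -> : 6 * mu * (4 / 3) ^+ k / expR (k%:R / 2 * ln 2) = mu * w.
  by rewrite /w; ring.
nra.
Qed.
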